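(* For all positive integers $n$ and $k$ with $k\geq 2$, and every function $\sigma\colon E(K_{4n})\to\{-1,1\}$ with $\left|\sigma\left(E(K_{4n})\right)\right|< n(n-1)+k(6n-1)+k^2$, there is a perfect matching $M$ in $K_{4n}$ with $|\sigma(M)|\leq 2k-2$.
   Context: $K_{4n}$ denotes the complete graph on $4n$ vertices and $E(K_{4n})$ its edge set. For a set $F$ of edges, $\sigma(F)=\sum_{e\in F}\sigma(e)$. *)

(* Defs.v *)
From mathcomp Require Import all_boot all_order all_algebra.
Set Implicit Arguments. Unset Strict Implicit. Unset Printing Implicit Defensive.
Import Order.TTheory GRing.Theory Num.Theory.

Definition edges (m : nat) : {set {set 'I_m}} := [set e : {set 'I_m} | #|e| == 2].

Definition perfect_matching (m : nat) (M : {set {set 'I_m}}) : Prop :=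
  M \subset edges m /\
  (forall e f, e \in M -> f \in M -> e != f -> [disjoint e & f]) /\
  (forall v : 'I_m, exists2 e, e \in M & v \in e).

Definition sigma_sum (m : nat) (sigma : {set 'I_m} -> int) (F : {set {set 'I_m}}) : int :=
  \sum_(e in F) sigma e.

(* Main.v *)
Require Import Defs.
From mathcomp Require Import all_boot all_order all_algebra.
Import Order.TTheory GRing.Theory Num.Theory.
Local Open Scope ring_scope.
From mathcomp Require Import zify ring lra.
From Stdlib Require Import Classical.
Set Implicit Arguments. Unset Strict Implicit. Unset Printing Implicit Defensive.
Lemma arith (N m t a D X Y U : nat) :
  (a <= t)%N -> (t <= m)%N -> (4 * m+8 <= N)%N -> (U + 2 * t = N)%N ->
  (X <= a * U + (2 * t - 2 * a))%N -> (Y + a * (a-1) <= 2 * t * (2 * t - 1))%N ->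
  D = (2 * X + Y)%N -> (D <= 2 * m * N - m * (m+1))%N.
Proof.
move=> h1 h2 h3 h4 h5 h6 ->.
nia.
Qed.


Section Gen.
Variable T : finType.
Variable s : T -> T -> int.
Hypothesis sym : forall u v, s u v = s v u.
Hypothesis pm1 : forall u v, u != v -> s u v = 1 \/ s u v = -1.

Definition inv (p : T -> T) := forall v, p (p v) = v /\ p v != v.
Definition Tv (p : T -> T) : int := \sum_v s v (p v).

Definition swap (p : T -> T) a b v :=
  if v == a then b else if v == b then a else if v == p a then p b
  else if v == p b then p a else p v.

Lemma inv_inj p : inv p -> injective p.
Proof. by move=> ip u v e; rewrite -(proj1 (ip u)) e (proj1 (ip v)). Qed.

Lemma sum4 (F : T -> int) a b c d :
  a != b -> a != c -> a != d -> b != c -> b != d -> c != d ->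
  \sum_v F v = F a + F b + F c + F d +
     \sum_(v | [&& v != a, v != b, v != c & v != d]) F v.
Proof.
move=> ab ac ad bc bd cd.
rewrite (bigD1 a) // (bigD1 b) /= 1?eq_sym // (bigD1 c) /= 1?(eq_sym c) 1?(eq_sym c b) ?ac ?bc //.
rewrite (bigD1 d) /= 1?(eq_sym d) 1?(eq_sym d b) 1?(eq_sym d c) ?ad ?bd ?cd //.
rewrite !addrA; congr (_ + _); apply: eq_bigl => v.
by rewrite -!andbA.
Qed.

Section Swap.
Variables (p : T -> T) (a b : T).
Hypothesis ip : inv p.
Hypothesis ab : a != b.
Hypothesis bpa : b != p a.

Let pp v : p (p v) = v. Proof. exact: (proj1 (ip v)). Qed.
Let pn v : p v != v. Proof. exact: (proj2 (ip v)). Qed.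
Let pinj := inv_inj ip.
Let neq_p u v : (p u == p v) = (u == v).
Proof. by apply/eqP/eqP => [/pinj|->]. Qed.

Lemma swap_dist : [/\ a != p a, a != p b, b != p b, p a != p b & p a != b].
Proof.
split.
- by rewrite eq_sym pn.
- by apply/eqP => e; move/eqP: bpa; apply; rewrite e pp.
- by rewrite eq_sym pn.
- by rewrite neq_p.
- by rewrite eq_sym.
Qed.

Lemma swap_a : swap p a b a = b. Proof. by rewrite /swap eqxx. Qed.
Lemma swap_b : swap p a b b = a. Proof. by rewrite /swap eq_sym (negbTE ab) eqxx. Qed.
Lemma swap_pa : swap p a b (p a) = p b.
Proof. have [apa _ _ _ pab] := swap_dist.
by rewrite /swap eq_sym (negbTE apa) (negbTE pab) eqxx. Qed.
Lemma swap_pb : swap p a b (p b) = p a.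
Proof. have [apa apb bpb papb pab] := swap_dist.
by rewrite /swap eq_sym (negbTE apb) eq_sym (negbTE bpb) eq_sym (negbTE papb) eqxx. Qed.
Lemma swap_o v : v != a -> v != b -> v != p a -> v != p b -> swap p a b v = p v.
Proof. by move=> h1 h2 h3 h4; rewrite /swap (negbTE h1) (negbTE h2) (negbTE h3) (negbTE h4). Qed.

Lemma swap_inv : inv (swap p a b).
Proof.
have [apa apb bpb papb pab] := swap_dist.
move=> v.
case: (eqVneq v a) => [->|va].
  by rewrite swap_a swap_b; split; rewrite // eq_sym.
case: (eqVneq v b) => [->|vb].
  by rewrite swap_b swap_a; split.
case: (eqVneq v (p a)) => [->|vpa].
  by rewrite swap_pa swap_pb; split; rewrite // eq_sym.
case: (eqVneq v (p b)) => [->|vpb].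
  by rewrite swap_pb swap_pa; split.
have h1 : p v != a by apply: contra vpa => /eqP <-; rewrite pp.
have h2 : p v != b by apply: contra vpb => /eqP <-; rewrite pp.
have h3 : p v != p a by rewrite neq_p.
have h4 : p v != p b by rewrite neq_p.
by rewrite !swap_o // pp pn.
Qed.

Lemma swap_T : Tv (swap p a b) =
  Tv p - 2 * s a (p a) - 2 * s b (p b) + 2 * s a b + 2 * s (p a) (p b).
Proof.
have [apa apb bpb papb pab] := swap_dist.
have E1 := sum4 (fun v => s v (swap p a b v)) ab apa apb bpa bpb papb.
have E2 := sum4 (fun v => s v (p v)) ab apa apb bpa bpb papb.
rewrite /Tv E1 E2.
rewrite swap_a swap_b swap_pa swap_pb pp pp.
have -> : \sum_(v | [&& v != a, v != b, v != p a & v != p b]) s v (swap p a b v)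
   = \sum_(v | [&& v != a, v != b, v != p a & v != p b]) s v (p v).
  by apply: eq_bigr => v /and4P [h1 h2 h3 h4]; rewrite swap_o.
rewrite (sym b a) (sym (p b) (p a)) (sym (p a) a) (sym (p b) b).
ring.
Qed.

End Swap.

Section Opt.
Variable p : T -> T.
Hypothesis ip : inv p.
Hypothesis opt : forall q, inv q -> Tv p <= Tv q.

Let pp v : p (p v) = v. Proof. exact: (proj1 (ip v)). Qed.
Let pn v : p v != v. Proof. exact: (proj2 (ip v)). Qed.
Let pinj := inv_inj ip.
Let neq_p u v : (p u == p v) = (u == v).
Proof. by apply/eqP/eqP => [/pinj|->]. Qed.

Definition U := [set v | s v (p v) == 1].
Definition Mv := ~: U.
Definition neg x u := s x u == -1.
Definition NU x := [set u in U | neg x u].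
Definition dU x := #|NU x|.
Definition H := [set x in Mv | (1 < dU x)%N].

Lemma inU u : u \in U -> s u (p u) = 1.
Proof. by rewrite inE => /eqP. Qed.
Lemma inMv x : x \in Mv -> s x (p x) = -1.
Proof. rewrite /Mv in_setC inE => h; have xp : x != p x by rewrite eq_sym pn.
have [e|//] := pm1 xp; by move: h; rewrite e eqxx. Qed.
Lemma pU u : (p u \in U) = (u \in U).
Proof. by rewrite !inE pp sym. Qed.
Lemma pMv u : (p u \in Mv) = (u \in Mv).
Proof. by rewrite /Mv !in_setC pU. Qed.
Lemma UMv u x : u \in U -> x \in Mv -> u != x.
Proof. by move=> hu; apply: contraL => /eqP <-; rewrite /Mv in_setC hu. Qed.

Lemma optswap a b : a != b -> b != p a ->
  Tv p <= Tv p - 2 * s a (p a) - 2 * s b (p b) + 2 * s a b + 2 * s (p a) (p b).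
Proof. by move=> ab bpa; rewrite -swap_T //; apply: opt; apply: swap_inv. Qed.

Lemma F1 u w : u \in U -> w \in U -> u != w -> s u w = 1.
Proof.
move=> hu hw uw; case: (eqVneq w (p u)) => [->|wpu]; first exact: inU.
have := optswap uw wpu; rewrite (inU hu) (inU hw).
have : p u != p w by rewrite neq_p.
move=> /pm1 [->|->]; have [->|->] := pm1 uw; lia.
Qed.

Lemma negE x u : x != u -> neg x u = false -> s x u = 1.
Proof. by move=> xu; rewrite /neg; have [->|->] := pm1 xu. Qed.

Lemma exNU x u : (1 < dU x)%N -> exists2 w, w \in NU x & w != u.
Proof.
move=> h; have : (0 < #|NU x :\ u|)%N.
  by move: h; rewrite /dU (cardsD1 u); case: (u \in NU x) => /=; lia.
case/card_gt0P => w; rewrite in_setD1 => /andP [wu wN]; by exists w.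
Qed.

Lemma F2 x u : x \in Mv -> (1 < dU x)%N -> u \in U -> neg (p x) u -> False.
Proof.
move=> xM hx uU nyu.
have [w] := exNU u hx; rewrite inE => /andP [wU nxw] wu.
have xw : x != w by rewrite eq_sym UMv.
have wpx : w != p x by rewrite UMv // pMv.
have ip1 := swap_inv ip xw wpx.
have T1 := swap_T ip xw wpx.
rewrite (inMv xM) (inU wU) (eqP nxw) in T1.
have pwU : p w \in U by rewrite pU.
case: (eqVneq u (p w)) => [e|upw].
  have := opt ip1; rewrite T1 -e (eqP nyu) => hh; clear -hh; lia.
have yu : p x != u by rewrite eq_sym UMv // pMv.
have p1y : swap p x w (p x) = p w by rewrite swap_pa.
have up1y : u != swap p x w (p x) by rewrite p1y.
have T2 := swap_T ip1 yu up1y.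
have p1u : swap p x w u = p u.
  rewrite swap_o //; [exact: UMv | by rewrite eq_sym | by rewrite UMv // pMv].
rewrite p1y p1u (inU uU) (eqP nyu) T1 in T2.
have puU : p u \in U by rewrite pU.
have e : s (p w) (p u) = 1 by apply: F1; rewrite // neq_p.
have := opt (swap_inv ip1 yu up1y); rewrite T2 e => hh; clear -hh; lia.
Qed.

Lemma F2' x u : x \in Mv -> (1 < dU x)%N -> u \in U -> s (p x) u = 1.
Proof.
move=> xM hx uU; apply: negE; first by rewrite eq_sym UMv // pMv.
by apply/negP => /(F2 xM hx uU).
Qed.

Lemma inH x : x \in H = (x \in Mv) && (1 < dU x)%N.
Proof. by rewrite /H in_set. Qed.

Lemma F3 x1 x2 : x1 \in H -> x2 \in H -> x1 != x2 -> neg (p x1) (p x2) -> False.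
Proof.
rewrite !inH => /andP [x1M h1] /andP [x2M h2] x12 ny.
have [u1] := exNU x1 h1; rewrite inE => /andP [u1U n1] _.
have [u2] := exNU u1 h2; rewrite inE => /andP [u2U n2] u21.
have pu1U : p u1 \in U by rewrite pU.
have pu2U : p u2 \in U by rewrite pU.
have y1M : p x1 \in Mv by rewrite pMv.
have y2M : p x2 \in Mv by rewrite pMv.
have xu1 : x1 != u1 by rewrite eq_sym UMv.
have u1px : u1 != p x1 by rewrite UMv.
have ip1 := swap_inv ip xu1 u1px.
have T1 := swap_T ip xu1 u1px.
rewrite (inMv x1M) (inU u1U) (eqP n1) (F2' x1M h1 pu1U) in T1.
have p1y1 : swap p x1 u1 (p x1) = p u1 by rewrite swap_pa.
have y2x1 : p x2 != x1.
  by apply/eqP => e; have := F2' x2M h2 u1U; rewrite e (eqP n1).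
have p1y2 : swap p x1 u1 (p x2) = x2.
  rewrite swap_o ?pp //.
  - by rewrite eq_sym UMv.
  - by rewrite neq_p eq_sym.
  - by rewrite neq_p eq_sym UMv.
have y12 : p x1 != p x2 by rewrite neq_p.
have y2p1y1 : p x2 != swap p x1 u1 (p x1) by rewrite p1y1 eq_sym UMv.
have ip2 := swap_inv ip1 y12 y2p1y1.
have T2 := swap_T ip1 y12 y2p1y1.
rewrite p1y1 p1y2 (F2' x1M h1 pu1U) (eqP ny) sym (inMv x2M) T1 in T2.
case: (eqVneq u2 (p u1)) => [e|u2pu1].
  have := opt ip2; rewrite T2 -e (sym u2) (eqP n2) => hh; clear -hh; lia.
have p2x2 : swap (swap p x1 u1) (p x1) (p x2) x2 = p u1.
  by have := swap_pb ip1 y12 y2p1y1; rewrite p1y2 p1y1.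
have p2u2 : swap (swap p x1 u1) (p x1) (p x2) u2 = p u2.
  rewrite swap_o; last 4 first.
  - by rewrite UMv.
  - by rewrite UMv.
  - by rewrite p1y1.
  - by rewrite p1y2 UMv.
  by rewrite swap_o // ?UMv // eq_sym.
have x2u2 : x2 != u2 by rewrite eq_sym UMv.
have u2p2 : u2 != swap (swap p x1 u1) (p x1) (p x2) x2 by rewrite p2x2.
have T3 := swap_T ip2 x2u2 u2p2.
rewrite p2x2 p2u2 (inU u2U) (eqP n2) (F1 pu1U pu2U) ?neq_p 1?eq_sym // T2 in T3.
have := opt (swap_inv ip2 x2u2 u2p2); rewrite T3 (sym x2) => hh; clear -hh; lia.
Qed.


Section Count.
Local Open Scope nat_scope.
Definition deg u := #|[set v | (v != u) && neg u v]|.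
Definition dM x := #|[set v in Mv | (v != x) && neg x v]|.
Definition pH := p @: H.

Lemma cardP (A : {set T}) (P : pred T) : #|[set x in A | P x]| = \sum_(x in A) P x.
Proof.
rewrite -sum1_card [LHS]big_mkcond [RHS]big_mkcond; apply: eq_bigr => x _.
by rewrite in_set; case: (x \in A); case: (P x).
Qed.

Lemma negC x u : neg x u = neg u x.
Proof. by rewrite /neg sym. Qed.

Lemma degU u : u \in U -> deg u = #|[set x in Mv | neg u x]|.
Proof.
move=> uU; apply: eq_card => v; rewrite in_set [RHS]in_set.
case: (boolP (v \in Mv)) => vM /=; first by rewrite eq_sym (UMv uU vM).
case: (eqVneq v u) => //= vu.
have vU : v \in U by move: vM; rewrite /Mv in_setC negbK.
by rewrite /neg (F1 uU vU) 1?eq_sym.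
Qed.

Lemma degM x : x \in Mv -> deg x = dU x + dM x.
Proof.
move=> xM; rewrite /deg -(cardsID U); congr (_ + _).
  apply: eq_card => v; rewrite in_setI in_set [RHS]in_set.
  case: (boolP (v \in U)) => vU /=; last by rewrite andbF.
  by rewrite andbT (UMv vU xM).
apply: eq_card => v; rewrite in_setD in_set [RHS]in_set.
by rewrite /Mv in_setC andbC.
Qed.


Lemma sumU : \sum_(u in U) deg u = \sum_(x in Mv) dU x.
Proof.
rewrite (eq_bigr (fun u => \sum_(x in Mv) neg u x)); last first.
  by move=> u uU; rewrite degU // cardP.
rewrite exchange_big; apply: eq_bigr => x _.
rewrite /dU /NU cardP; apply: eq_bigr => u _; by rewrite negC.
Qed.

Lemma Dsplit : \sum_u deg u = 2 * \sum_(x in Mv) dU x + \sum_(x in Mv) dM x.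
Proof.
rewrite (bigID (mem U)) /= sumU.
have -> : \sum_(i | i \notin U) deg i = \sum_(x in Mv) deg x.
  by apply: eq_bigl => x; rewrite /Mv in_setC.
have -> : \sum_(x in Mv) deg x = \sum_(x in Mv) (dU x + dM x).
  by apply: eq_bigr => x xM; rewrite degM.
rewrite big_split /=; lia.
Qed.

Lemma HsubM : H \subset Mv.
Proof. by apply/subsetP => x; rewrite inH => /andP []. Qed.
Lemma pHsubM : pH \subset Mv.
Proof.
apply/subsetP => x /imsetP [h hH ->]; rewrite pMv.
by move: hH; rewrite inH => /andP [].
Qed.
Lemma card_pH : #|pH| = #|H|.
Proof. by rewrite card_imset. Qed.

Lemma dU_pH x : x \in pH -> dU x = 0.
Proof.
case/imsetP => h; rewrite inH => /andP [hM hd] ->.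
apply/eqP; rewrite cards_eq0; apply/eqP/setP => u; rewrite in_set in_set0.
apply/negP => /andP [uU]; by rewrite /neg (F2' hM hd uU).
Qed.

Lemma HpH0 : H :&: pH = set0.
Proof.
apply/setP => x; rewrite in_setI in_set0; apply/negP => /andP [xH xpH].
by move: xH; rewrite inH dU_pH // andbF.
Qed.

Lemma card_HpH : #|H :|: pH| = 2 * #|H|.
Proof. by rewrite cardsU HpH0 cards0 card_pH; lia. Qed.

Lemma HpH_le : 2 * #|H| <= #|Mv|.
Proof.
rewrite -card_HpH; apply: subset_leq_card.
by rewrite subUset HsubM pHsubM.
Qed.

Lemma sum_ind (A B : {set T}) : B \subset A -> \sum_(x in A) (x \in B) = #|B|.
Proof. by move=> BA; rewrite -cardP; apply: eq_card => x; rewrite in_set; apply/andb_idl => /(subsetP BA). Qed.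

Lemma bound_dU : \sum_(x in Mv) dU x <= #|H| * #|U| + (#|Mv| - 2 * #|H|).
Proof.
set R := Mv :\: (H :|: pH).
have RM : R \subset Mv by apply: subsetDl.
have cR : #|R| = #|Mv| - 2 * #|H|.
  have HM : H :|: pH \subset Mv by rewrite subUset HsubM pHsubM.
  by rewrite cardsD (setIidPr HM) card_HpH.
apply: (@leq_trans (\sum_(x in Mv) ((x \in H) * #|U| + (x \in R)))).
  apply: leq_sum => x xM.
  case: (boolP (x \in H)) => xH /=.
    rewrite mul1n; apply: leq_trans (leq_addr _ _); apply: subset_leq_card.
    by apply/subsetP => u; rewrite in_set => /andP [].
  case: (boolP (x \in pH)) => xpH; first by rewrite dU_pH.
  have -> : x \in R by rewrite /R in_setD in_setU xM (negbTE xH) (negbTE xpH).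
  by move: xH; rewrite inH xM /= -leqNgt.
by rewrite big_split /= -big_distrl /= sum_ind ?HsubM // sum_ind // cR.
Qed.

Lemma bound_dM : \sum_(x in Mv) dM x + #|H| * (#|H| - 1) <= #|Mv| * (#|Mv| - 1).
Proof.
apply: (@leq_trans (\sum_(x in Mv) (dM x + (x \in pH) * (#|H| - 1)))).
  rewrite big_split /= -big_distrl /= sum_ind ?pHsubM // card_pH //.
rewrite -sum_nat_const; apply: leq_sum => x xM.
have sub1 : [set v in Mv | (v != x) && neg x v] \subset Mv :\ x.
  by apply/subsetP => v; rewrite !inE => /andP [vM /andP [vx _]]; rewrite vx vM.
have cMx : #|Mv :\ x| = #|Mv| - 1 by rewrite (cardsD1 x Mv) xM; lia.
case: (boolP (x \in pH)) => xpH /=; last first.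
  by rewrite mul0n addn0 /dM -cMx subset_leq_card.
rewrite mul1n -cMx.
have cpx : #|pH :\ x| = #|H| - 1 by rewrite -card_pH (cardsD1 x pH) xpH /=; lia.
rewrite /dM -cpx.
have dis : [set v in Mv | (v != x) && neg x v] :&: (pH :\ x) = set0.
  apply/setP => v; rewrite !inE; apply/negP => /andP [/andP [vM /andP [vx nxv]] /andP [_ vpH]].
  case/imsetP: xpH => h1 h1H e1; case/imsetP: vpH => h2 h2H e2.
  have h12 : h1 != h2 by apply: contra vx => /eqP e; rewrite e1 e2 e.
  by apply: (F3 h1H h2H h12); rewrite -e1 -e2.
have -> : #|[set v in Mv | (v != x) && neg x v]| + #|pH :\ x| =
   #|[set v in Mv | (v != x) && neg x v] :|: (pH :\ x)|.
  by rewrite -cardsUI dis cards0 addn0.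
apply: subset_leq_card; rewrite subUset sub1 /=.
apply/subsetP => v; rewrite !in_setD1 => /andP [-> vpH]; by rewrite (subsetP pHsubM).
Qed.
End Count.

Lemma TvUM : Tv p = (#|U|)%:Z - (#|Mv|)%:Z.
Proof.
rewrite /Tv (bigID (mem U)) /=.
rewrite (eq_bigr (fun _ => 1)); last by move=> v vU; rewrite inU.
have -> : \sum_(i | i \notin U) s i (p i) = \sum_(x in Mv) s x (p x).
  by apply: eq_bigl => x; rewrite /Mv in_setC.
have -> : \sum_(x in Mv) s x (p x) = \sum_(x in Mv) (-1 : int).
  by apply: eq_bigr => v vM; rewrite inMv.
by rewrite !sumr_const mulNrn !natz.
Qed.

Lemma Mv_even : exists t, #|Mv| = (2 * t)%N.
Proof.
set X := [set x in Mv | (enum_rank x < enum_rank (p x))%N].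
exists #|X|.
have XM : X \subset Mv by apply/subsetP => x; rewrite in_set => /andP [].
have dis : X :&: (p @: X) = set0.
  apply/setP => x; rewrite in_setI in_set0; apply/negP => /andP [xX /imsetP [y yX e]].
  move: xX yX; rewrite !in_set e pp => /andP [_ h1] /andP [_ h2]; lia.
have -> : Mv = X :|: p @: X.
  apply/setP => x; rewrite in_setU; apply/idP/idP.
    move=> xM; case: (ltngtP (enum_rank x) (enum_rank (p x))) => h.
    - by rewrite in_set xM h.
    - apply/orP; right; apply/imsetP; exists (p x); last by rewrite pp.
      by rewrite in_set pMv xM pp h.
    - by move/val_inj/enum_rank_inj: h => h; move: (pn x); rewrite -h eqxx.
  case/orP; first by move/(subsetP XM).
  by case/imsetP => y yX ->; rewrite pMv (subsetP XM).
by rewrite cardsU dis cards0 (card_imset _ pinj); lia.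
Qed.

End Opt.

Lemma row u : \sum_(v | v != u) s u v = (#|T| - 1)%:Z - 2 * (deg u)%:Z.
Proof.
rewrite (eq_bigr (fun v => 1 - 2 * (neg u v)%:Z)); last first.
  move=> v vu; have uv : u != v by rewrite eq_sym.
  by rewrite /neg; have [->|->] := pm1 uv.
rewrite sumrB sumr_const -mulr_sumr.
have -> : #|[pred v | v != u]| = (#|T| - 1)%N.
  by rewrite subn1 -(cardC1 u); apply: eq_card => v; rewrite !inE.
have -> : \sum_(v | v != u) (neg u v)%:Z = (deg u)%:Z.
  under eq_bigr do rewrite -natz.
  rewrite -natr_sum natz /deg -sum1_card; congr (_%:Z).
  rewrite [RHS]big_mkcond [LHS]big_mkcond; apply: eq_bigr => v _.
  by rewrite in_set; case: (v != u); case: (neg u v).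
lia.
Qed.

Lemma s_bnd u v : u != v -> -1 <= s u v <= 1.
Proof. by move=> uv; have [->|->] := pm1 uv. Qed.

Lemma exists_opt p0 : inv p0 -> exists2 p, inv p & forall q, inv q -> Tv p <= Tv q.
Proof.
move=> ip0.
pose invb (f : {ffun T -> T}) := [forall v, (f (f v) == v) && (f v != v)].
pose F (f : {ffun T -> T}) := Tv f.
have h0 : invb (finfun p0).
  by apply/forallP => v; rewrite !ffunE; have [-> ->] := ip0 v; rewrite eqxx.
case: (@arg_minP _ _ _ (finfun p0) invb F h0) => f hf hmin.
have ipf : inv f by move=> v; have /andP [/eqP -> ->] := forallP hf v.
exists f => // q iq.
have hq : invb (finfun q).
  by apply/forallP => v; rewrite !ffunE; have [-> ->] := iq v; rewrite eqxx.
have := hmin _ hq; rewrite /F /Tv.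
by under [X in _ <= X]eq_bigr do rewrite ffunE.
Qed.

Lemma key (m : nat) p0 : inv p0 -> (4 * m+8 <= #|T|)%N ->
  (forall q, inv q -> (#|T|%:Z) - (4 * m+3)%:Z <= Tv q) ->
  (#|T| * (#|T| - 1))%:Z - 2 * (2 * m * #|T| - m * (m+1))%:Z <=
     \sum_u \sum_(v | v != u) s u v.
Proof.
move=> ip0 hN hq.
have [p ip opt] := exists_opt ip0.
have [t ht] := Mv_even ip.
have hT := hq _ ip; rewrite (TvUM ip) in hT.
have hC : (#|U p| + #|Mv p| = #|T|)%N by rewrite /Mv cardsC.
have htm : (t <= m)%N by lia.
have hD := Dsplit ip opt.
have h1 := bound_dU ip opt.
have h2 := bound_dM ip opt.
have h3 := HpH_le ip opt.
have hD2 : (\sum_u deg u <= 2 * m * #|T| - m * (m+1))%N.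
  apply: (@arith #|T| m t #|H p|  _ (\sum_(x in Mv p) dU p x) (\sum_(x in Mv p) dM p x) #|U p|) => //; lia.
rewrite (eq_bigr (fun u => (#|T| - 1)%:Z - 2 * (deg u)%:Z)); last by move=> u _; rewrite row.
have E : forall c : int, \sum_(u : T) c = c *+ #|T| by move=> c; rewrite sumr_const.
rewrite sumrB E -mulr_sumr.
under [X in _ <= _ - 2 * X]eq_bigr do rewrite -natz.
rewrite -natr_sum natz pmulrn mulrzz.
move: hD2; set D := (\sum_u deg u)%N; set N := #|T|; clear; nia.
Qed.

Lemma cont (c : int) : 5 <= c -> (forall r, inv r -> c <= `|Tv r|) ->
  forall p q, inv p -> inv q -> c <= Tv p -> Tv q <= -c -> False.
Proof.
move=> c5 hall p q ip iq.
move: {2}#|[set v | p v != q v]| (leqnn #|[set v | p v != q v]|) => K.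
have qq v : q (q v) = v by have [] := iq v.
have qn v : q v != v by have [] := iq v.
elim: K p ip => [|K IH] p ip hK hp hq'.
  have same : forall v, p v = q v.
    move=> v; apply/eqP; case: (eqVneq (p v) (q v)) => // h.
    by move: hK; rewrite (cardsD1 v) in_set h.
  have : Tv p = Tv q by apply: eq_bigr => v _; rewrite same.
  move=> e; move: hp hq'; rewrite e => h1 h2; clear -h1 h2 c5; lia.
have pp v : p (p v) = v by have [] := ip v.
case: (pickP (fun v => p v != q v)) => [v pvq | same]; last first.
  have : Tv p = Tv q.
    by apply: eq_bigr => w _; have := same w; rewrite /= => /negbFE/eqP ->.
  move=> e; move: hp hq'; rewrite e => h1 h2; clear -h1 h2 c5; lia.
have ab : v != q v by rewrite eq_sym qn.
have bpa : q v != p v by rewrite eq_sym.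
have [apa apb bpb papb pab] := swap_dist ip ab bpa.
have ip' := swap_inv ip ab bpa.
have T' := swap_T ip ab bpa.
have b1 := s_bnd apa.
have b2 := s_bnd bpb.
have b3 := s_bnd ab.
have b4 := s_bnd papb.
have hsub : [set w | swap p v (q v) w != q w] \subset [set w | p w != q w] :\ v.
  apply/subsetP => w; rewrite !inE => h.
  case: (eqVneq w v) => [e|wv]; first by move: h; rewrite e swap_a ?eqxx.
  rewrite andTb; apply: contra h => /eqP pwq.
  rewrite swap_o //.
  - by rewrite pwq.
  - by apply/eqP => e; move/eqP: bpa; apply; rewrite -e -[LHS](pp w) pwq e qq.
  - by apply/eqP => e; move/eqP: bpa; apply; rewrite -e; apply: esym; rewrite -[LHS](qq w) -pwq e pp.
  - by apply/eqP => e; move/eqP: wv; apply; rewrite -(qq w) -pwq e pp qq.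
have hK' : (#|[set w | swap p v (q v) w != q w]| <= K)%N.
  apply: leq_trans (subset_leq_card hsub) _.
  by move: hK; rewrite (cardsD1 v) in_set pvq /=.
have := hall _ ip'; rewrite ler_normr => /orP [h|h].
  by apply: (IH _ ip' hK' h hq').
move: h hp; rewrite T'; clear -b1 b2 b3 b4 c5; lia.
Qed.

Lemma Tv_bnd p : inv p -> `|Tv p| <= (#|T|)%:Z.
Proof.
move=> ip; apply: le_trans (ler_norm_sum _ _ _) _.
have -> : (#|T|)%:Z = \sum_(v : T) (1 : int) by rewrite sumr_const natz.
apply: ler_sum => v _; have vp : v != p v by rewrite eq_sym (proj2 (ip v)).
by have [->|->] := pm1 vp.
Qed.

End Gen.

Lemma dc (X Y : finType) (A : {set X}) (h : X -> Y) (F : Y -> int) :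
 (forall y, y \in h @: A -> #|[set x in A | h x == y]| = 2%N) ->
 \sum_(x in A) F (h x) = 2 * \sum_(y in h @: A) F y.
Proof.
move=> H2; rewrite (partition_big_imset h) /= mulr_sumr; apply: eq_bigr => y hy.
transitivity (\sum_(x in [set x in A | h x == y]) F y).
  by apply: eq_big => [x|x /andP [_ /eqP ->]] //; rewrite in_set.
by rewrite sumr_const (H2 _ hy) mulr_natl.
Qed.

Section Main.
Variable N : nat.
Variable sigma : {set 'I_N} -> int.
Definition sg (u v : 'I_N) := sigma [set u; v].
Hypothesis hs : forall e, e \in edges N -> sigma e = 1 \/ sigma e = -1.

Lemma sg_sym u v : sg u v = sg v u. Proof. by rewrite /sg setUC. Qed.
Lemma sg_pm1 u v : u != v -> sg u v = 1 \/ sg u v = -1.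
Proof. by move=> uv; apply: hs; rewrite /edges in_set cards2 uv. Qed.

Definition Mp (p : 'I_N -> 'I_N) := (fun v => [set v; p v]) @: [set: 'I_N].

Section P.
Variable p : 'I_N -> 'I_N.
Hypothesis ip : inv p.
Let pp v : p (p v) = v. Proof. exact: (proj1 (ip v)). Qed.
Let pn v : p v != v. Proof. exact: (proj2 (ip v)). Qed.

Lemma pair_eq x v : ([set x; p x] == [set v; p v]) = (x == v) || (x == p v).
Proof.
apply/eqP/orP => [e|[/eqP ->|/eqP ->]] //; last by rewrite pp setUC.
have : x \in [set v; p v] by rewrite -e set21.
by rewrite in_set2 => /orP.
Qed.

Lemma Mp_pm : perfect_matching (Mp p).
Proof.
split; [|split].
- by apply/subsetP => e /imsetP [v _ ->]; rewrite /edges in_set cards2 (eq_sym v) pn.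
- move=> e f /imsetP [v _ ->] /imsetP [w _ ->] ne.
  rewrite -setI_eq0; apply/eqP/setP => z; rewrite in_setI in_set0.
  apply/negP => /andP [zv zw].
  have e1 : [set z; p z] == [set v; p v] by rewrite pair_eq -in_set2.
  have e2 : [set z; p z] == [set w; p w] by rewrite pair_eq -in_set2.
  by move: ne; rewrite -(eqP e1) -(eqP e2) eqxx.
- move=> v; exists [set v; p v]; last by rewrite set21.
  by apply/imsetP; exists v.
Qed.

Lemma Mp_sum : 2 * sigma_sum sigma (Mp p) = Tv sg p.
Proof.
rewrite /sigma_sum /Tv -(dc (A := [set: 'I_N]) (h := fun v => [set v; p v])).
  by apply: eq_bigl => v; rewrite in_setT.
move=> y /imsetP [v _ ->].
have -> : [set x in [set: 'I_N] | [set x; p x] == [set v; p v]] = [set v; p v].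
  by apply/setP => x; rewrite in_set in_setT pair_eq in_set2.
by rewrite cards2 (eq_sym v) pn.
Qed.

End P.

Lemma pair2 (a b x1 x2 : 'I_N) : b != a ->
  ((x2 != x1) && ([set x1; x2] == [set a; b])) = ((x1, x2) == (a, b)) || ((x1, x2) == (b, a)).
Proof.
move=> ba; apply/idP/idP.
  case/andP => ne /eqP e.
  have h1 : x1 \in [set a; b] by rewrite -e set21.
  have h2 : x2 \in [set a; b] by rewrite -e set22.
  move: h1 h2 ne; rewrite !in_set2 !xpair_eqE.
  by case/orP => /eqP -> /orP [] /eqP ->; rewrite ?eqxx ?andbT ?orbT.
rewrite !xpair_eqE; case/orP => /andP [/eqP -> /eqP ->]; rewrite ?eqxx ?andbT.
  by rewrite ba.
by rewrite (eq_sym a) ba setUC eqxx.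
Qed.

Lemma edges_sum : 2 * sigma_sum sigma (edges N) = \sum_u \sum_(v | v != u) sg u v.
Proof.
rewrite pair_big_dep /=.
set A := [set z : 'I_N * 'I_N | z.2 != z.1].
pose h := fun z : 'I_N * 'I_N => [set z.1; z.2].
have hA : edges N = h @: A.
  apply/setP => e; apply/idP/imsetP.
    rewrite /edges in_set => /cards2P [x [y [xy ->]]].
    by exists (x, y); rewrite // in_set /= eq_sym.
  by case=> z; rewrite in_set => zA ->; rewrite /edges in_set cards2 (eq_sym z.1) zA.
transitivity (\sum_(z in A) sigma (h z)); last by apply: eq_bigl => z; rewrite in_set.
rewrite (dc (h := h)) -?hA //.
move=> y; rewrite /edges in_set => /cards2P [a [b [ab ->]]].
have ba : b != a by rewrite eq_sym.
rewrite (_ : [set x in A | h x == [set a; b]] = [set (a, b); (b, a)]).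
  by rewrite cards2 xpair_eqE eq_sym (negbTE ba).
apply/setP => [[x1 x2]]; rewrite in_set in_set2 in_set /=.
exact: pair2.
Qed.

End Main.

Lemma flip_lt (N v : nat) : ~~ odd N -> (v < N)%N -> ((if odd v then v.-1 else v.+1) < N)%N.
Proof.
move=> eN vN; case: (boolP (odd v)) => ov; first by case: v vN ov => //= v' h _; lia.
rewrite ltn_neqAle vN andbT; apply/eqP => e; move: eN; rewrite -e /= ov.
by [].
Qed.

Lemma exists_inv (N : nat) : ~~ odd N -> exists p : 'I_N -> 'I_N, inv p.
Proof.
move=> eN; exists (fun v => Ordinal (flip_lt eN (ltn_ord v))).
move=> v; split.
  apply/val_inj => /=; case: (boolP (odd v)) => ov /=.
    by move: ov; case: (nat_of_ord v) => //= v' /negbTE ->.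
  by rewrite /= ov.
apply/eqP => e; move: (congr1 val e) => /=.
by case: (nat_of_ord v) => [|v'] //=; case: (odd v') => /=; lia.
Qed.

Lemma final_arith (n k m : nat) (X : int) : (k <= n)%N -> m = (n - k)%N -> (2 <= k)%N ->
  ((4 * n) * (4 * n - 1))%N%:Z - 2 * (2 * m * (4 * n) - m * (m + 1))%N%:Z <= 2 * X ->
  (n * (n - 1) + k * (6 * n - 1) + k ^ 2)%N%:Z <= X.
Proof.
move=> kn -> k2.
have [j ->] : exists j, n = (j + k)%N by exists (n - k)%N; lia.
rewrite addnK expnS expn1.
have e1 : ((4 * (j + k)) * (4 * (j + k) - 1))%N = (4 * (j + k) * (4 * (j + k)) - 4 * (j + k))%N by rewrite mulnBr muln1.
rewrite e1; clear e1.
nia.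
Qed.

Unset Implicit Arguments.

Theorem theorem3 (n k : nat) (sigma : {set 'I_(4 * n)} -> int) :
  (0 < n)%N -> (2 <= k)%N ->
  (forall e, e \in edges (4 * n) -> sigma e = 1 \/ sigma e = -1) ->
  `|sigma_sum sigma (edges (4 * n))| <
    (n * (n - 1) + k * (6 * n - 1) + k ^ 2)%:Z ->
  exists M : {set {set 'I_(4 * n)}},
    perfect_matching M /\ `|sigma_sum sigma M| <= (2 * k - 2)%:Z.
Proof.
move=> n0 k2 hs habs.
have eN : ~~ odd (4 * n) by rewrite oddM.
have [p0 ip0] := exists_inv eN.
have sym := sg_sym sigma.
have pm1 := sg_pm1 hs.
case: (leqP k n) => kn; last first.
  exists (Mp p0); split; first exact: Mp_pm.
  have e := Mp_sum sigma ip0.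
  have b := Tv_bnd pm1 ip0; rewrite card_ord in b.
  move: b; rewrite -e !ler_norml => /andP [b1 b2]; apply/andP; split; lia.
destruct (classic (exists p, inv p /\ `|Tv (sg sigma) p| <= (4 * k - 4)%N%:Z)) as [[p [ip hp]] | hno].
  exists (Mp p); split; first exact: Mp_pm.
  have e := Mp_sum sigma ip.
  move: hp; rewrite -e !ler_norml => /andP [b1 b2]; apply/andP; split; lia.
pose c : int := (4 * k - 3)%N%:Z.
have c5 : 5 <= c by rewrite /c; lia.
have hall : forall r, inv r -> c <= `|Tv (sg sigma) r|.
  move=> r ir; rewrite leNgt; apply/negP => h; apply: hno; exists r; split => //.
  move: h; rewrite /c; lia.
pose m := (n - k)%N.
have h48 : (4 * m + 8 <= #|'I_(4 * n)|)%N by rewrite card_ord /m; lia.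
have hE := edges_sum sigma.
have := hall _ ip0; rewrite ler_normr => /orP [hpos|hneg].
  have allp : forall q, inv q -> c <= Tv (sg sigma) q.
    move=> q iq; have := hall q iq; rewrite ler_normr => /orP [//|h].
    exfalso; apply: (cont sym pm1 c5 hall ip0 iq hpos); lia.
  have hq' : forall q, inv q -> (#|'I_(4 * n)|)%:Z - (4 * m + 3)%N%:Z <= Tv (sg sigma) q.
    move=> q iq; have := allp q iq; rewrite card_ord /c /m; lia.
  have K := key sym pm1 ip0 h48 hq'.
  rewrite card_ord -hE in K.
  have := final_arith kn (erefl m) k2 K.
  have := ler_norm (sigma_sum sigma (edges (4 * n))).
  move: habs; set X := sigma_sum _ _; set Y := (_ + _)%N; clear; lia.
have allq : forall q, inv q -> Tv (sg sigma) q <= - c.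
  move=> q iq; have := hall q iq; rewrite ler_normr => /orP [h|h]; last by lia.
  exfalso; apply: (cont sym pm1 c5 hall iq ip0 h); lia.
pose s' := fun u v => - sg sigma u v.
have sym' : forall u v, s' u v = s' v u by move=> u v; rewrite /s' sym.
have pm1' : forall u v, u != v -> s' u v = 1 \/ s' u v = -1.
  by move=> u v uv; rewrite /s'; have [->|->] := pm1 _ _ uv; [right|left]; rewrite ?opprK.
have Tv' : forall q, Tv s' q = - Tv (sg sigma) q by move=> q; rewrite /Tv -sumrN.
have hq' : forall q, inv q -> (#|'I_(4 * n)|)%:Z - (4 * m + 3)%N%:Z <= Tv s' q.
  move=> q iq; have := allq q iq; rewrite Tv' card_ord /c /m; lia.
have K := key sym' pm1' ip0 h48 hq'.
have eK : \sum_u \sum_(v | v != u) s' u v = - \sum_u \sum_(v | v != u) sg sigma u v.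
  by rewrite -sumrN; apply: eq_bigr => u _; rewrite -sumrN.
rewrite eK card_ord -hE in K.
have K2 : ((4 * n) * (4 * n - 1))%N%:Z - 2 * (2 * m * (4 * n) - m * (m + 1))%N%:Z <=
   2 * (- sigma_sum sigma (edges (4 * n))) by rewrite mulrN.
have := final_arith kn (erefl m) k2 K2.
have := ler_norm (- sigma_sum sigma (edges (4 * n))); rewrite normrN.
move: habs; set X := sigma_sum _ _; set Y := (_ + _)%N; clear; lia.
Qed.
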